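(* Let $V$ be a finite nonempty set of voters and $A$ a finite set of alternatives with $|A|\ge 4$. Let $F:\mathcal{P}(V,A)\to S_2(A)$ be a consular election rule that is Marian, satisfies SPO and SPP, and is weakly viable. Then $F$ has a weak dictator, i.e. a voter $i$ such that for every profile $P$, the top-ranked alternative of $P_i$ belongs to $F(P)$.
   Context: A profile assigns to each voter $i\in V$ a linear order $P_i$ on $A$; $P_i'P_{-i}$ replaces voter $i$'s order by $P_i'$. $S_2(A)$ is the set of 2-element subsets of $A$; a consular election rule is a map $F:\mathcal{P}(V,A)\to S_2(A)$. $\mathrm{best}(P_i,W)$, $\mathrm{worst}(P_i,W)$ denote the $P_i$-best and $P_i$-worst elements of nonempty $W\subseteq A$. SPO: for all profiles $P$, voters $i$ and linear orders $P_i'$, $\mathrm{best}(P_i,F(P))\succeq_i\mathrm{best}(P_i,F(P_i'P_{-i}))$; SPP: same with $\mathrm{worst}$. Weakly viable: every $a\in A$ lies in $F(P)$ for some $P$. $F$ is Marian if there is $m\in A$ with $m\in F(P)$ for every profile $P$. *)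

(* Defs.v *)
From mathcomp Require Import all_boot fingroup perm.
Set Implicit Arguments. Unset Strict Implicit. Unset Printing Implicit Defensive.

(* A linear order on A is encoded by a ranking permutation r : {perm A}:
   r x is the position of x (0 = top); x is weakly preferred to y iff r x <= r y.
   Here positions live in A itself via enum_rank, i.e. ranks are taken in 'I_#|A|. *)
Definition linord (A : finType) := {perm A}.

Definition rank (A : finType) (P : linord A) (x : A) : nat := enum_rank (P x).

Definition wpref (A : finType) (P : linord A) (x y : A) : bool := rank P x <= rank P y.

Definition profile (V A : finType) := {ffun V -> linord A}.

Definition update (V A : finType) (P : profile V A) (i : V) (Pi : linord A) : profile V A :=
  [ffun j => if j == i then Pi else P j].

Definition best (A : finType) (P : linord A) (W : {set A}) : option A :=
  [pick x in W | [forall y in W, wpref P x y]].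
Definition worst (A : finType) (P : linord A) (W : {set A}) : option A :=
  [pick x in W | [forall y in W, wpref P y x]].

Definition opt_wpref (A : finType) (P : linord A) (o1 o2 : option A) : bool :=
  match o1, o2 with Some x, Some y => wpref P x y | _, _ => false end.

Definition consular (V A : finType) (F : profile V A -> {set A}) : Prop :=
  forall P : profile V A, #|F P| = 2.

Definition SPO (V A : finType) (F : profile V A -> {set A}) : Prop :=
  forall (P : profile V A) (i : V) (Pi' : linord A),
    opt_wpref (P i) (best (P i) (F P)) (best (P i) (F (update P i Pi'))).

Definition SPP (V A : finType) (F : profile V A -> {set A}) : Prop :=
  forall (P : profile V A) (i : V) (Pi' : linord A),
    opt_wpref (P i) (worst (P i) (F P)) (worst (P i) (F (update P i Pi'))).

Definition weakly_viable (V A : finType) (F : profile V A -> {set A}) : Prop :=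
  forall a : A, exists P : profile V A, a \in F P.

Definition marian (V A : finType) (F : profile V A -> {set A}) : Prop :=
  exists m : A, forall P : profile V A, m \in F P.

Definition top (A : finType) (P : linord A) (x : A) : Prop :=
  forall y, wpref P x y.

Definition weak_dictator (V A : finType) (F : profile V A -> {set A}) (i : V) : Prop :=
  forall (P : profile V A) (x : A), top (P i) x -> x \in F P.

(* Main.v *)
Require Import Defs.
From mathcomp Require Import all_boot fingroup perm.
Set Implicit Arguments. Unset Strict Implicit. Unset Printing Implicit Defensive.



Lemma wpref_refl (A : finType) (R : linord A) x : wpref R x x.
Proof. by rewrite /wpref. Qed.

Lemma wpref_trans (A : finType) (R : linord A) x y z :
  wpref R x y -> wpref R y z -> wpref R x z.
Proof. rewrite /wpref; exact: leq_trans. Qed.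

Lemma wpref_total (A : finType) (R : linord A) x y : wpref R x y || wpref R y x.
Proof. by rewrite /wpref leq_total. Qed.

Lemma wpref_anti (A : finType) (R : linord A) x y :
  wpref R x y -> wpref R y x -> x = y.
Proof.
rewrite /wpref /rank => h1 h2.
have /eqP e : (enum_rank (R x) : nat) == enum_rank (R y) by rewrite eqn_leq h1 h2.
by move/val_inj/enum_rank_inj/perm_inj: e.
Qed.

Definition cnt (A : finType) (k : A -> nat) (x : A) : nat := #|[set y | k y < k x]|.

Lemma cnt_lt (A : finType) (k : A -> nat) x : cnt k x < #|A|.
Proof.
rewrite /cnt -cardsT; apply: proper_card; apply/properP; split.
  by apply/subsetP=> y; rewrite inE.
by exists x; rewrite ?inE // ltnn.
Qed.

Lemma cnt_le (A : finType) (k : A -> nat) x y : (cnt k x <= cnt k y) = (k x <= k y).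
Proof.
rewrite /cnt; case: (leqP (k x) (k y)) => h.
  apply: subset_leq_card; apply/subsetP=> z; rewrite !inE => hz.
  exact: leq_trans hz h.
apply/negbTE; rewrite -ltnNge; apply: proper_card; apply/properP; split.
  apply/subsetP=> z; rewrite !inE => hz; exact: ltn_trans hz h.
by exists y; rewrite !inE ?ltnn.
Qed.

Definition hord (A : finType) (k : A -> nat) (x : A) : 'I_#|A| := Ordinal (cnt_lt k x).

Lemma hord_inj (A : finType) (k : A -> nat) : injective k -> injective (hord k).
Proof.
move=> ki x y /(congr1 val) /= e; apply: ki; apply/eqP.
rewrite eqn_leq. rewrite -(cnt_le k x y) -(cnt_le k y x) e !leqnn //.
Qed.
Definition mkperm (A : finType) (k : A -> nat) (ki : injective k) : linord A :=
  perm (inj_comp (@enum_val_inj _ _) (hord_inj ki)).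
Lemma wpref_mkperm (A : finType) (k : A -> nat) (ki : injective k) x y :
  wpref (mkperm ki) x y = (k x <= k y).
Proof.
rewrite /wpref /rank /mkperm !permE.
rewrite !enum_valK.
exact: cnt_le.
Qed.

Definition key (A : finType) (s : seq A) (R : linord A) (x : A) : nat :=
  if x \in s then index x s else size s + rank R x.

Lemma key_inj (A : finType) (s : seq A) (R : linord A) : injective (key s R).
Proof.
move=> x y; rewrite /key.
case: ifP => hx; case: ifP => hy.
- move=> e; by rewrite -(nth_index x hx) e nth_index.
- move=> e; have := index_mem x s; rewrite hx e => h.
  by move: (leq_ltn_trans (leq_addr _ _) h); rewrite ltnn.
- move=> e; have := index_mem y s; rewrite hy -e => h.
  by move: (leq_ltn_trans (leq_addr _ _) h); rewrite ltnn.
- move/addnI => e; apply: perm_inj; apply: enum_rank_inj; apply: val_inj; exact: e.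
Qed.

Definition mkord (A : finType) (s : seq A) (R : linord A) : linord A := mkperm (@key_inj _ s R).

Lemma wpref_mkord (A : finType) (s : seq A) (R : linord A) x y :
  wpref (mkord s R) x y = (key s R x <= key s R y).
Proof. exact: wpref_mkperm. Qed.

Lemma mkord_in_out (A : finType) (s : seq A) (R : linord A) x y :
  x \in s -> y \notin s -> wpref (mkord s R) x y.
Proof.
move=> hx hy; rewrite wpref_mkord /key hx (negbTE hy).
apply: (leq_trans (index_size x s)); exact: leq_addr.
Qed.

Lemma mkord_in (A : finType) (s : seq A) (R : linord A) x y :
  x \in s -> y \in s -> wpref (mkord s R) x y = (index x s <= index y s).
Proof. by move=> hx hy; rewrite wpref_mkord /key hx hy. Qed.

Lemma mkord_head (A : finType) (s : seq A) (R : linord A) x y :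
  wpref (mkord (x :: s) R) x y.
Proof. by rewrite wpref_mkord /key inE eqxx /= eqxx. Qed.

Lemma update_id (V A : finType) (P : profile V A) i Q :
  update (update P i Q) i (P i) = P.
Proof.
apply/ffunP=> j; rewrite !ffunE; case: eqP => [->|] //.
Qed.

Record GS (V A : finType) (m : A) (g : profile V A -> A) : Prop := {
  gs_neq : forall P, g P != m;
  gs_onto : forall x, x != m -> exists P, g P = x;
  gs_sp : forall (P : profile V A) (i : V) (Q : linord A), wpref (P i) (g P) (g (update P i Q)) }.

Lemma MM1 (V A : finType) (m : A) g (H : GS m g) (R : profile V A) i Q a :
  g R = a -> (forall y, wpref (R i) a y -> wpref Q a y) -> g (update R i Q) = a.
Proof.
move=> ga hQ.
have h1 : wpref Q a (g (update R i Q)) by apply: hQ; rewrite -ga; exact: gs_sp H _ _ _.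
have := gs_sp H (update R i Q) i (R i); rewrite update_id ga ffunE eqxx => h2.
exact: esym (wpref_anti h1 h2).
Qed.

Lemma MM (V A : finType) (m : A) g (H : GS m g) (P P' : profile V A) a :
  g P = a -> (forall i y, wpref (P i) a y -> wpref (P' i) a y) -> g P' = a.
Proof.
move=> ga hP.
pose mix (s : seq V) : profile V A := [ffun j => if j \in s then P' j else P j].
suff: forall s, g (mix s) = a.
  move/(_ (enum V)); congr (g _ = a); apply/ffunP=> j; by rewrite ffunE mem_enum.
elim=> [|x s IH].
  by rewrite -ga; congr g; apply/ffunP=> j; rewrite ffunE.
have -> : mix (x :: s) = update (mix s) x (P' x).
  apply/ffunP=> j; rewrite !ffunE inE; case: eqP => [->|] //.
apply: (MM1 H IH) => y; rewrite ffunE; case: ifP => _; [exact: id | exact: hP].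
Qed.

Lemma unanim (V A : finType) (m : A) g (H : GS m g) (P : profile V A) x :
  x != m -> (forall i y, wpref (P i) x y) -> g P = x.
Proof.
move=> xm hx; have [P0 e] := gs_onto H xm.
by apply: (MM H e) => i y _; exact: hx.
Qed.

Lemma pareto (V A : finType) (m : A) g (H : GS m g) (P : profile V A) x y :
  x != m -> x != y -> (forall i, wpref (P i) x y) -> g P != y.
Proof.
move=> xm xy hxy; apply/eqP => gy.
pose P' : profile V A := [ffun i => mkord [:: x; y] (P i)].
have e1 : g P' = y.
  apply: (MM H gy) => i z hz; rewrite ffunE.
  case: (eqVneq z x) => [ez|zx].
    by subst z; move: xy; rewrite (wpref_anti hz (hxy i)) eqxx.
  case: (eqVneq z y) => [->|zy]; first exact: wpref_refl.
  by apply: mkord_in_out; rewrite !inE ?eqxx ?orbT // negb_or zx zy.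
have e2 : g P' = x.
  by apply: (unanim H xm) => i z; rewrite ffunE; apply: mkord_head.
by move: xy; rewrite -e1 e2 eqxx.
Qed.

Definition Dc (V A : finType) (g : profile V A -> A) (S : {set V}) (a b : A) : Prop :=
  forall P : profile V A, (forall i, i \in S -> ~~ wpref (P i) b a) -> g P != b.

Lemma Dlem (V A : finType) (m : A) g (H : GS m g) (Q : profile V A) a b :
  g Q = a -> a != b ->
  forall P : profile V A, (forall i, ~~ wpref (Q i) b a -> ~~ wpref (P i) b a) -> g P != b.
Proof.
move=> ga ab P hP; apply/eqP => gb.
pose P' : profile V A :=
  [ffun i => mkord (if wpref (P i) a b then [:: a; b] else [:: b; a]) (P i)].
have ba : b != a by rewrite eq_sym.
have e1 : g P' = b.
  apply: (MM H gb) => i y hy; rewrite ffunE.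
  case: ifP => hab.
    case: (eqVneq y a) => [ey|ya].
      by subst y; move: ab; rewrite (wpref_anti hab hy) eqxx.
    case: (eqVneq y b) => [->|yb]; first exact: wpref_refl.
    by apply: mkord_in_out; rewrite !inE ?eqxx ?orbT // negb_or ya yb.
  exact: mkord_head.
have e2 : g P' = a.
  apply: (MM H ga) => i y hy; rewrite ffunE.
  case: ifP => hab.
    exact: mkord_head.
  have hQ : wpref (Q i) b a.
    case: (boolP (wpref (Q i) b a)) => // /hP hn.
    by move: (wpref_total (P i) a b); rewrite hab (negbTE hn).
  case: (eqVneq y b) => [ey|yb].
    by subst y; move: ab; rewrite (wpref_anti hQ hy) eqxx.
  case: (eqVneq y a) => [->|ya]; first exact: wpref_refl.
  rewrite wpref_mkord /key !inE eqxx orbT /= (negbTE yb) (negbTE ya) /=.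
  by rewrite (negbTE ba) eqxx.
by move: ab; rewrite -e2 e1 eqxx.
Qed.

Lemma D_empty (V A : finType) (m : A) g (H : GS m g) a b :
  b != m -> ~ @Dc V A g set0 a b.
Proof.
move=> bm hD; have [P e] := gs_onto H bm.
have h : g P != b by apply: hD => i; rewrite inE.
by rewrite e eqxx in h.
Qed.

Ltac mem := by rewrite !inE ?eqxx ?orbT.
Ltac simp6 ab ba ac ca bc cb :=
  rewrite /= ?eqxx ?(negbTE ab) ?(negbTE ba) ?(negbTE ac) ?(negbTE ca) ?(negbTE bc) ?(negbTE cb) //.

Lemma three (V A : finType) (m : A) g (H : GS m g) (S1 S2 : {set V}) a b c :
  a != m -> b != m -> c != m -> a != b -> a != c -> b != c ->
  Dc g (S1 :|: S2) a b -> Dc g S1 a c \/ Dc g S2 c b.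
Proof.
move=> am bm cm ab ac bc hD.
have ba : b != a by rewrite eq_sym.
have ca : c != a by rewrite eq_sym.
have cb : c != b by rewrite eq_sym.
pose Q : profile V A := [ffun i => mkord (if i \in S1 then [:: a; b; c]
   else if i \in S2 then [:: c; a; b] else [:: b; c; a]) 1%g].
have gb : g Q != b.
  apply: hD => i; rewrite inE ffunE => hi.
  case: ifP => h1; first by rewrite mkord_in; [simp6 ab ba ac ca bc cb|mem|mem].
  have h2 : i \in S2 by move: hi; rewrite h1.
  by rewrite h2 mkord_in; [simp6 ab ba ac ca bc cb|mem|mem].
case: (eqVneq (g Q) a) => [ga|gna].
  left => P hP; apply: (Dlem H ga ac) => i; rewrite ffunE.
  case: ifP => h1; first by move=> _; apply: hP.
  by case: ifP => h2; rewrite mkord_in; [simp6 ab ba ac ca bc cb|mem|mem|simp6 ab ba ac ca bc cb|mem|mem].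
case: (eqVneq (g Q) c) => [gc|gnc].
  right => P hP; apply: (Dlem H gc cb) => i; rewrite ffunE.
  case: ifP => h1.
    by rewrite mkord_in; [simp6 ab ba ac ca bc cb|mem|mem].
  case: ifP => h2; first by move=> _; apply: hP.
  by rewrite mkord_in; [simp6 ab ba ac ca bc cb|mem|mem].
exfalso.
have hp : g Q != g Q.
  apply: (pareto H am); first by rewrite eq_sym.
  move=> i; rewrite ffunE; apply: mkord_in_out.
    by case: ifP => _; [|case: ifP => _]; rewrite !inE eqxx ?orbT.
  by case: ifP => _; [|case: ifP => _]; rewrite !inE !negb_or gna gb gnc.
by rewrite eqxx in hp.
Qed.

Lemma pick_other (A : finType) (a b m : A) : 4 <= #|A| -> exists c, [&& c != a, c != b & c != m].
Proof.
move=> hA; case: (pickP [pred c | [&& c != a, c != b & c != m]]) => [c hc|none].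
  by exists c.
have : [set: A] \subset [set a; b; m].
  apply/subsetP=> x _; move: (none x) => /= /negbT.
  by rewrite !inE !negb_and !negbK orbA.
move/subset_leq_card; rewrite cardsT => h.
have : #|[set a; b; m]| <= 3.
  rewrite setUC !cardsU1 cards1.
  by case: (_ \notin _); case: (_ \notin _).
move=> h3; have := leq_trans h h3; by move/(leq_trans hA).
Qed.

Ltac neq := solve [assumption | rewrite eq_sym; assumption].

Definition Dec (V A : finType) (m : A) (g : profile V A -> A) (S : {set V}) : Prop :=
  forall x y, x != m -> y != m -> x != y -> Dc g S x y.

Lemma expand (V A : finType) (m : A) g (H : GS m g) (S : {set V}) a b :
  4 <= #|A| -> a != m -> b != m -> a != b -> Dc g S a b -> Dec m g S.
Proof.
move=> hA am bm ab hD.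
have R1 : forall a b c, a != m -> b != m -> c != m -> a != b -> a != c -> b != c ->
    Dc g S a b -> Dc g S a c.
  move=> a' b' c' h1 h2 h3 h4 h5 h6 h.
  have h' : Dc g (S :|: set0) a' b' by rewrite setU0.
  by case: (three H h1 h2 h3 h4 h5 h6 h') => // /(D_empty H h2).
have R2 : forall a b c, a != m -> b != m -> c != m -> a != b -> a != c -> b != c ->
    Dc g S a b -> Dc g S c b.
  move=> a' b' c' h1 h2 h3 h4 h5 h6 h.
  have h' : Dc g (set0 :|: S) a' b' by rewrite set0U.
  by case: (three H h1 h2 h3 h4 h5 h6 h') => // /(D_empty H h3).
move=> x y xm ym xy.
case: (eqVneq x a) => [ex|xa].
  subst x; case: (eqVneq y b) => [->|yb] //.
  by apply: (R1 a b y) => //; neq.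
case: (eqVneq x b) => [ex|xb].
  subst x; case: (eqVneq y a) => [ey|ya].
    subst y; have [c /and3P [ca cb cm]] := pick_other a b m hA.
    have h1 : Dc g S a c by apply: (R1 a b c) => //; neq.
    have h2 : Dc g S b c by apply: (R2 a c b) => //; neq.
    by apply: (R1 b c a) => //; neq.
  have h1 : Dc g S a y by apply: (R1 a b y) => //; neq.
  by apply: (R2 a y b) => //; neq.
have h1 : Dc g S x b by apply: (R2 a b x) => //; neq.
case: (eqVneq y b) => [->|yb] //.
by apply: (R1 x b y) => //; neq.
Qed.

Lemma three_distinct (A : finType) (m : A) : 4 <= #|A| ->
  exists a b c, [/\ a != m, b != m, c != m & [/\ a != b, a != c & b != c]].
Proof.
move=> hA.
have [a /and3P [_ _ am]] := pick_other m m m hA.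
have [b /and3P [ba _ bm]] := pick_other a m m hA.
have [c /and3P [ca cb cm]] := pick_other a b m hA.
by exists a, b, c; split => //; split => //; rewrite eq_sym.
Qed.

Lemma contract (V A : finType) (m : A) g (H : GS m g) (S1 S2 : {set V}) :
  4 <= #|A| -> Dec m g (S1 :|: S2) -> Dec m g S1 \/ Dec m g S2.
Proof.
move=> hA hD; have [a [b [c [am bm cm [ab ac bc]]]]] := three_distinct m hA.
case: (three H am bm cm ab ac bc (hD a b am bm ab)) => h.
  by left; apply: (expand H hA am cm ac h).
by right; apply: (expand H hA cm bm _ h); rewrite eq_sym.
Qed.

Lemma single (V A : finType) (m : A) g (H : GS m g) (S : {set V}) :
  4 <= #|A| -> Dec m g S -> exists i, Dec m g [set i].
Proof.
move=> hA; move: {2}#|S| (leqnn #|S|) => n; elim: n S => [|n IH] S hS hD.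
  have [a [b [c [am bm cm [ab ac bc]]]]] := three_distinct m hA.
  have e : S = set0 by apply: cards0_eq; move: hS; rewrite leqn0 => /eqP.
  by move: (hD a b am bm ab); rewrite e => /(D_empty H bm).
case: (eqVneq S set0) => [e|/set0Pn [x hx]].
  have [a [b [c [am bm cm [ab ac bc]]]]] := three_distinct m hA.
  by move: (hD a b am bm ab); rewrite e => /(D_empty H bm).
move: hD; rewrite -(setD1K hx) => /(contract H hA) [h|h]; first by exists x.
apply: (IH _ _ h); move: hS; rewrite (cardsD1 x S) hx add1n ltnS //.
Qed.

Lemma DecT (V A : finType) (m : A) g (H : GS m g) : Dec m g [set: V].
Proof.
move=> x y xm ym xy P hP; apply: (pareto H xm xy) => i.
move: (hP i (in_setT i)); move: (wpref_total (P i) x y); case: (wpref _ x y) => //=.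
by move=> -> .
Qed.

Lemma GS_dict (V A : finType) (m : A) (g : profile V A -> A) (H : GS m g) :
  4 <= #|A| -> exists i : V, forall (P : profile V A) (x : A), x != m -> (forall y, wpref (P i) x y) -> g P = x.
Proof.
move=> hA; have [i hi] := single H hA (DecT H).
exists i => P x xm hx; apply/eqP; apply/negPn/negP => gx.
have xg : x != g P by rewrite eq_sym.
have hc : g P != g P.
  apply: (hi x (g P) xm (gs_neq H P) xg P) => j; rewrite inE => /eqP ->.
  apply/negP => h; by move: xg; rewrite (wpref_anti (hx _) h) eqxx.
by rewrite eqxx in hc.
Qed.

Definition gF (V A : finType) (F : profile V A -> {set A}) (m : A) (P : profile V A) : A :=
  odflt m [pick x in F P :\ m].

Lemma gF_spec (V A : finType) (F : profile V A -> {set A}) (m : A) :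
  consular F -> (forall P, m \in F P) -> forall P,
  [/\ gF F m P \in F P, gF F m P != m & forall z, z \in F P -> z = m \/ z = gF F m P].
Proof.
move=> hc hm P.
have c1 : #|F P :\ m| == 1 by move: (hc P); rewrite (cardsD1 m) hm add1n => [[->]].
case/cards1P: c1 => x ex.
have gx : gF F m P = x.
  rewrite /gF; case: pickP => [y|]; rewrite ex; first by move=> /set1P ->.
  by move/(_ x); rewrite set11.
have : x \in F P :\ m by rewrite ex set11.
rewrite in_setD1 => /andP [xm xF]; rewrite gx; split => // z hz.
case: (eqVneq z m) => [->|zm]; [by left | right].
have : z \in F P :\ m by rewrite in_setD1 zm hz.
by rewrite ex => /set1P.
Qed.

Lemma best_spec (A : finType) (R : linord A) (W : {set A}) x0 : x0 \in W ->
  exists x, [/\ best R W = Some x, x \in W & forall y, y \in W -> wpref R x y].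
Proof.
move=> h0; rewrite /best; case: pickP => [x /andP [hx /forall_inP hf]|none].
  by exists x.
case: (arg_minnP (rank R) h0) => x hx hmin.
have hx' : x \in W := hx.
move: (none x) => /=; rewrite hx' /= => /negbT /negP []; apply/forall_inP => y hy.
exact: hmin.
Qed.

Lemma worst_spec (A : finType) (R : linord A) (W : {set A}) x0 : x0 \in W ->
  exists x, [/\ worst R W = Some x, x \in W & forall y, y \in W -> wpref R y x].
Proof.
move=> h0; rewrite /worst; case: pickP => [x /andP [hx /forall_inP hf]|none].
  by exists x.
case: (arg_maxnP (rank R) h0) => x hx hmax.
have hx' : x \in W := hx.
move: (none x) => /=; rewrite hx' /= => /negbT /negP []; apply/forall_inP => y hy.
exact: hmax.
Qed.

Lemma gF_GS (V A : finType) (F : profile V A -> {set A}) (m : A) :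
  consular F -> (forall P, m \in F P) -> SPO F -> SPP F -> weakly_viable F ->
  GS m (gF F m).
Proof.
move=> hc hm hO hP hW; have hs := gF_spec hc hm.
split.
- by move=> P; case: (hs P).
- move=> x xm; have [P hx] := hW x; exists P.
  by case: (hs P) => _ _ /(_ x hx) [e|]; [move: xm; rewrite e eqxx|].
move=> P i Q; set P' := update P i Q; set R := P i.
case: (hs P) => aF _ hFP; case: (hs P') => bF _ hFP'.
have [bx [ebx bxF bxmin]] := best_spec R (hm P).
have [by_ [eby byF bymin]] := best_spec R (hm P').
have [wx [ewx wxF wxmax]] := worst_spec R (hm P).
have [wy [ewy wyF wymax]] := worst_spec R (hm P').
have h1 : wpref R bx by_ by move: (hO P i Q); rewrite ebx eby.
have h2 : wpref R wx wy by move: (hP P i Q); rewrite ewx ewy.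
have awx : wpref R (gF F m P) wx by apply: wxmax.
case: (hFP' _ wyF) => ewy'.
  have am : wpref R (gF F m P) m by move: (wpref_trans awx h2); rewrite ewy'.
  have abx : wpref R (gF F m P) bx.
    by case: (hFP _ bxF) => ->; [|exact: wpref_refl].
  apply: wpref_trans abx _; apply: wpref_trans h1 _; exact: bymin.
by move: (wpref_trans awx h2); rewrite ewy'.
Qed.

Theorem proposition17 (V A : finType) (F : profile V A -> {set A}) :
  0 < #|V| -> 4 <= #|A| ->
  consular F -> marian F -> SPO F -> SPP F -> weakly_viable F ->
  exists i : V, weak_dictator F i.
Proof.
move=> _ hA hc [m hm] hO hP hW.
have H := gF_GS hc hm hO hP hW.
have [i hi] := GS_dict H hA.
exists i => P x htop.
case: (eqVneq x m) => [->|xm]; first exact: hm.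
have := hi P x xm htop => <-.
by case: (gF_spec hc hm P).
Qed.
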